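(* The (multi-valued) Kasner map realizes chaos for all $v\in (0,1/2)$.
   Context: Fix a parameter $v\in(0,1/2)$. Let $\mathrm{K}^{\circ}$ denote the Kasner circle $\{(\Sigma_+,\Sigma_-)\,:\,\Sigma_+^2+\Sigma_-^2=1\}$, parametrized by the angle $\varphi$ via $(\Sigma_+,\Sigma_-)=(\cos\varphi,\sin\varphi)$. Let $A_1:=\{\Sigma_+\ge v\}\cap \mathrm{K}^{\circ}$, i.e. $\varphi\in[-\arccos v,\arccos v]$, and let $A_2,A_3$ be its images under rotation by $\pm 2\pi/3$ (namely $A_2=\{-(\Sigma_++\sqrt3\Sigma_-)/2\ge v\}$, $A_3=\{-(\Sigma_+-\sqrt3\Sigma_-)/2\ge v\}$). On $A_1$ define $\mathcal{K}_1(\varphi):=\pi-2\arctan\big(\tfrac{1+v}{1-v}\tan(\varphi/2)\big)$ (the map sending the $\alpha$-limit to the $\omega$-limit of Bianchi type II heteroclinic orbits with $N_1\neq0$), and let $\mathcal{K}_2,\mathcal{K}_3$ on $A_2,A_3$ be the maps obtained from $\mathcal{K}_1$ by the same rotations. Set $\mathbf{A}:=(A_1\cap A_2)\cup(A_2\cap A_3)\cup(A_1\cap A_3)$; for $v<1/2$ these overlaps have positive length. For $\mu\in\{1,2\},\nu\in\{2,3\},\zeta\in\{1,3\}$ define $\mathcal{K}_{\mu\nu\zeta}:\mathrm{K}^{\circ}\to\mathrm{K}^{\circ}$ by $\mathcal{K}_{\mu\nu\zeta}(p)=\mathcal{K}_\alpha(p)$ if $p\in A_\alpha\setminus\mathbf{A}$,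 $=\mathcal{K}_\mu(p)$ if $p\in A_1\cap A_2$, $=\mathcal{K}_\nu(p)$ if $p\in A_2\cap A_3$, $=\mathcal{K}_\zeta(p)$ if $p\in A_1\cap A_3$. Let $\Sigma$ be the space of sequences $\omega=(\mu_n,\nu_n,\zeta_n)_{n\ge1}$ with $\mu_n\in\{1,2\},\nu_n\in\{2,3\},\zeta_n\in\{1,3\}$, and for $\omega=(\omega_n)$ set $\mathcal{K}^n_\omega:=\mathcal{K}_{\omega_n}\circ\cdots\circ\mathcal{K}_{\omega_1}$, $\mathcal{K}^0_\omega=\mathrm{Id}$. The (multi-valued) Kasner map is the skew product $(\omega,p)\mapsto(\sigma(\omega),\mathcal{K}_{\omega_1}(p))$ with $\sigma$ the shift. It realizes chaos if: (i) (sensitivity) there is $\delta>0$ such that for every $p\in\mathrm{K}^{\circ}$ and every neighborhood $U$ of $p$ there are $q\in U\setminus\{p\}$, $n\in\mathbb{N}_0$, $\omega,\omega^*\in\Sigma$ with $d(\mathcal{K}^n_\omega(p),\mathcal{K}^n_{\omega^*}(q))\ge\delta$; (ii) (topological transitivity) for any open $U,V\subset\mathrm{K}^{\circ}$ there are $n\in\mathbb{N}$, $\omega\in\Sigma$ with $\mathcal{K}^n_\omega(U)\cap V\neq\emptyset$; (iii) (dense periodic orbits) for every $p\in\mathrm{K}^{\circ}$ and every neighborhood $U$ of $p$ there are $\omega\in\Sigma$, $q\in U$, $n\in\mathbb{N}$ with $\mathcal{K}^n_\omega(q)=q$. *)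

(* Defs.v *)
From Stdlib Require Import Reals.
Open Scope R_scope.

(* Points of the Kasner circle are represented by an angle phi : R, standing for
   (Sigma_+, Sigma_-) = (cos phi, sin phi).  All definitions below are
   2*PI-periodic in phi, so they are well defined on the circle. *)

Definition Splus (phi : R) : R := cos phi.
Definition Sminus (phi : R) : R := sin phi.

Definition dK (phi psi : R) : R :=
  sqrt ((Splus phi - Splus psi)^2 + (Sminus phi - Sminus psi)^2).

Definition inA1 (v phi : R) : Prop := v <= Splus phi.
Definition inA2 (v phi : R) : Prop := v <= - (Splus phi + sqrt 3 * Sminus phi) / 2.
Definition inA3 (v phi : R) : Prop := v <= - (Splus phi - sqrt 3 * Sminus phi) / 2.

(* K_1 on A_1, and its rotated copies K_2 on A_2, K_3 on A_3
   (A_2 = A_1 rotated by -2PI/3, A_3 = A_1 rotated by +2PI/3). *)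
Definition K1 (v phi : R) : R :=
  PI - 2 * atan ((1 + v) / (1 - v) * tan (phi / 2)).
Definition K2 (v phi : R) : R := K1 v (phi + 2 * PI / 3) - 2 * PI / 3.
Definition K3 (v phi : R) : R := K1 v (phi - 2 * PI / 3) + 2 * PI / 3.

(* A symbol (mu, nu, zeta) with mu in {1,2}, nu in {2,3}, zeta in {1,3},
   encoded by three booleans:
     mu   = 1 if true, 2 if false;
     nu   = 2 if true, 3 if false;
     zeta = 1 if true, 3 if false. *)
Definition symbol : Type := (bool * bool * bool)%type.

Definition Kmu (v : R) (b : bool) : R -> R := if b then K1 v else K2 v.
Definition Knu (v : R) (b : bool) : R -> R := if b then K2 v else K3 v.
Definition Kzeta (v : R) (b : bool) : R -> R := if b then K1 v else K3 v.


(* K_{mu nu zeta}.  The three overlaps are pairwise disjoint (no triple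
   intersection) and A_1 u A_2 u A_3 is the whole circle for v < 1/2. *)
Definition Kmap (v : R) (s : symbol) (phi : R) : R :=
  let '(mu, nu, zeta) := s in
  if Rle_dec v (Splus phi) then
    if Rle_dec v (- (Splus phi + sqrt 3 * Sminus phi) / 2) then Kmu v mu phi
    else if Rle_dec v (- (Splus phi - sqrt 3 * Sminus phi) / 2) then Kzeta v zeta phi
    else K1 v phi
  else if Rle_dec v (- (Splus phi + sqrt 3 * Sminus phi) / 2) then
    if Rle_dec v (- (Splus phi - sqrt 3 * Sminus phi) / 2) then Knu v nu phi
    else K2 v phi
  else K3 v phi.

(* Sequences omega = (omega_1, omega_2, ...) are encoded as omega : nat -> symbol
   with omega k = omega_{k+1}.
   Kiter v omega n = K_{omega_n} o ... o K_{omega_1},  Kiter v omega 0 = Id. *)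
Fixpoint Kiter (v : R) (omega : nat -> symbol) (n : nat) (phi : R) : R :=
  match n with
  | O => phi
  | S m => Kmap v (omega m) (Kiter v omega m phi)
  end.

(* (i) sensitive dependence. Neighborhoods of p are unfolded as metric balls. *)
Definition sensitive (v : R) : Prop :=
  exists delta : R, 0 < delta /\
    forall (p eps : R), 0 < eps ->
      exists (q : R) (n : nat) (omega omega' : nat -> symbol),
        dK q p < eps /\ 0 < dK q p /\
        delta <= dK (Kiter v omega n p) (Kiter v omega' n q).

(* (ii) topological transitivity, for nonempty open U, V (unfolded to balls). *)
Definition top_transitive (v : R) : Prop :=
  forall (p1 p2 eps1 eps2 : R), 0 < eps1 -> 0 < eps2 ->
    exists (n : nat) (omega : nat -> symbol) (q : R),
      (1 <= n)%nat /\ dK q p1 < eps1 /\ dK (Kiter v omega n q) p2 < eps2.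

(* (iii) dense periodic orbits; equality on the circle = distance zero. *)
Definition dense_periodic (v : R) : Prop :=
  forall (p eps : R), 0 < eps ->
    exists (omega : nat -> symbol) (q : R) (n : nat),
      (1 <= n)%nat /\ dK q p < eps /\ dK (Kiter v omega n q) q = 0.

Definition realizes_chaos (v : R) : Prop :=
  sensitive v /\ top_transitive v /\ dense_periodic v.

(* Main.v *)
Require Import Defs.
From Stdlib Require Import Reals Lra Lia ZArith.
From Coquelicot Require Import Coquelicot.
Open Scope R_scope.

Lemma ivt_gen : forall (f : R -> R) x y c, x <= y ->
  (forall z, x <= z <= y -> continuity_pt f z) ->
  ((f x <= c <= f y) \/ (f y <= c <= f x)) ->
  exists z, x <= z <= y /\ f z = c.
Proof.
  intros f x y c Hxy Hc Hb.
  destruct (Req_dec (f x) c) as [E|E]. { exists x; split; [lra|auto]. }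
  destruct (Req_dec (f y) c) as [E'|E']. { exists y; split; [lra|auto]. }
  destruct (Req_dec x y) as [Exy|Exy]. { subst; lra. }
  destruct Hb as [Hb|Hb].
  - destruct (Ranalysis5.IVT_interv (fun z => f z - c) x y) as [z [Hz Hz']].
    + intros a Ha. apply continuity_pt_minus; [now apply Hc | apply continuity_pt_const; intros u w; reflexivity].
    + lra.
    + simpl; lra.
    + simpl; lra.
    + exists z; split; auto; simpl in Hz'; lra.
  - destruct (Ranalysis5.IVT_interv (fun z => c - f z) x y) as [z [Hz Hz']].
    + intros a Ha. apply continuity_pt_minus; [apply continuity_pt_const; intros u w; reflexivity| now apply Hc].
    + lra.
    + simpl; lra.
    + simpl; lra.
    + exists z; split; auto; simpl in Hz'; lra.
Qed.

Lemma cont_eps : forall f x, continuity_pt f x -> forall eps, 0 < eps ->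
  exists eta, 0 < eta /\ forall x', Rabs (x' - x) < eta -> Rabs (f x' - f x) < eps.
Proof.
  intros f x H eps He.
  destruct (H eps He) as [eta [Heta Hf]].
  exists eta; split; auto.
  intros x' Hx'.
  destruct (Req_dec x' x) as [E|E].
  - subst. rewrite Rminus_diag, Rabs_R0; auto.
  - apply (Hf x'). split.
    + split; [exact I | auto].
    + exact Hx'.
Qed.

Lemma cos_sin_perZ : forall x (k : Z), cos (x + 2*PI*IZR k) = cos x /\ sin (x + 2*PI*IZR k) = sin x.
Proof.
  intros x k. destruct k as [|p|p].
  - rewrite Rmult_0_r, Rplus_0_r; auto.
  - replace (IZR (Z.pos p)) with (INR (Pos.to_nat p)) by (rewrite INR_IZR_INZ, positive_nat_Z; auto).
    replace (2 * PI * INR (Pos.to_nat p)) with (2 * INR (Pos.to_nat p) * PI) by ring.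
    split; [apply cos_period|apply sin_period].
  - replace (IZR (Z.neg p)) with (- INR (Pos.to_nat p)).
    2:{ rewrite <- Pos2Z.opp_pos, opp_IZR, INR_IZR_INZ, positive_nat_Z; auto. }
    set (y := x + 2 * PI * - INR (Pos.to_nat p)).
    replace x with (y + 2 * INR (Pos.to_nat p) * PI) by (unfold y; ring).
    rewrite cos_period, sin_period. auto.
Qed.

Lemma tan_perN : forall t (n : nat), tan (t + INR n * PI) = tan t.
Proof.
  intros t n; induction n as [|n IH].
  - simpl. rewrite Rmult_0_l, Rplus_0_r; auto.
  - rewrite S_INR. replace (t + (INR n + 1) * PI) with ((t + INR n * PI) + PI) by ring.
    rewrite <- IH. unfold tan, Rdiv. rewrite neg_sin, neg_cos, Rinv_opp. ring.
Qed.

Lemma tan_perZ : forall t (k : Z), tan (t + IZR k * PI) = tan t.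
Proof.
  intros t k. destruct k as [|p|p].
  - rewrite Rmult_0_l, Rplus_0_r; auto.
  - replace (IZR (Z.pos p)) with (INR (Pos.to_nat p)) by (rewrite INR_IZR_INZ, positive_nat_Z; auto).
    apply tan_perN.
  - replace (IZR (Z.neg p)) with (- INR (Pos.to_nat p)).
    2:{ rewrite <- Pos2Z.opp_pos, opp_IZR, INR_IZR_INZ, positive_nat_Z; auto. }
    set (y := t + - INR (Pos.to_nat p) * PI).
    replace t with (y + INR (Pos.to_nat p) * PI) by (unfold y; ring).
    rewrite tan_perN; try reflexivity.
Qed.

Lemma K1_per : forall v x (k : Z), K1 v (x + 2*PI*IZR k) = K1 v x.
Proof.
  intros v x k. unfold K1.
  replace ((x + 2 * PI * IZR k) / 2) with (x/2 + IZR k * PI) by field.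
  rewrite tan_perZ. auto.
Qed.

Lemma Kmap_per : forall v s x (k : Z), Kmap v s (x + 2*PI*IZR k) = Kmap v s x.
Proof.
  intros v [[mu nu] zeta] x k. unfold Kmap, Splus, Sminus.
  destruct (cos_sin_perZ x k) as [Hc Hs]. rewrite Hc, Hs.
  assert (E1 : K1 v (x + 2*PI*IZR k) = K1 v x) by apply K1_per.
  assert (E2 : K2 v (x + 2*PI*IZR k) = K2 v x).
  { unfold K2. replace (x + 2 * PI * IZR k + 2 * PI / 3) with ((x + 2*PI/3) + 2*PI*IZR k) by ring.
    rewrite K1_per; auto. }
  assert (E3 : K3 v (x + 2*PI*IZR k) = K3 v x).
  { unfold K3. replace (x + 2 * PI * IZR k - 2 * PI / 3) with ((x - 2*PI/3) + 2*PI*IZR k) by ring.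
    rewrite K1_per; auto. }
  destruct (Rle_dec v (cos x)); destruct (Rle_dec v (- (cos x + sqrt 3 * sin x) / 2));
  destruct (Rle_dec v (- (cos x - sqrt 3 * sin x) / 2));
  destruct mu, nu, zeta; simpl; auto.
Qed.
Open Scope R_scope.

Lemma PI_gt3 : 3 < PI.
Proof. generalize PI2_3_2; lra. Qed.
Lemma PI_le4 : PI <= 4.
Proof. apply PI_4. Qed.

Lemma tan_half_sq : forall x, cos (x/2) <> 0 -> 1 + cos x <> 0 ->
  (tan (x/2))^2 = (1 - cos x) / (1 + cos x).
Proof.
  intros x H1 H2.
  replace x with (2 * (x/2)) at 2 3 by field.
  rewrite cos_2a_cos. unfold tan.
  assert (Hs : sin (x/2) ^ 2 = 1 - cos (x/2) ^ 2).
  { generalize (sin2_cos2 (x/2)); unfold Rsqr; simpl; lra. }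
  replace ((sin (x/2) / cos (x/2))^2) with (sin(x/2)^2 / cos(x/2)^2) by (field; auto).
  rewrite Hs. field. split; auto. intro Hc. apply H1. nra.
Qed.

Lemma atan_tan_half : forall x, -PI < x < PI -> 2 * atan (tan (x/2)) = x.
Proof.
  intros x Hx. rewrite atan_tan; [field|]. lra.
Qed.

Lemma K1_cont : forall v x, -PI < x < PI -> continuity_pt (K1 v) x.
Proof.
  intros v x Hx. apply continuity_pt_filterlim. apply (ex_derive_continuous (K1 v)).
  unfold K1. auto_derive.
  apply ex_derive_Reals_1. apply derivable_pt_tan. lra.
Qed.

Lemma K1_decr : forall v x y, 0 < v < 1 -> -PI < x -> x < y -> y < PI -> K1 v y < K1 v x.
Proof.
  intros v x y Hv Hx Hxy Hy. unfold K1.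
  assert (Ht : tan (x/2) < tan (y/2)) by (apply tan_increasing; lra).
  assert (Hk : 0 < (1+v)/(1-v)) by (apply Rdiv_lt_0_compat; lra).
  assert (atan ((1 + v) / (1 - v) * tan (x / 2)) < atan ((1 + v) / (1 - v) * tan (y / 2))).
  { apply atan_increasing. nra. }
  lra.
Qed.

Lemma K1_neg : forall v x, K1 v (-x) = 2*PI - K1 v x.
Proof.
  intros v x. unfold K1. replace (-x/2) with (-(x/2)) by field.
  rewrite tan_neg. replace ((1 + v) / (1 - v) * - tan (x / 2)) with (- ((1 + v) / (1 - v) * tan (x / 2))) by ring.
  rewrite atan_opp. ring.
Qed.

Section Ana.
Variable v : R.
Hypothesis Hv : 0 < v < 1/2.

Definition kk := (1+v)/(1-v).
Definition aa := acos v.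

Lemma kk_bounds : 1 < kk < 3.
Proof.
  unfold kk. split.
  - apply (Rmult_lt_reg_r (1 - v)); [lra|]. field_simplify; lra.
  - apply (Rmult_lt_reg_r (1 - v)); [lra|]. field_simplify; lra.
Qed.

Lemma aa_prop : cos aa = v /\ PI/3 < aa < PI/2.
Proof.
  unfold aa. assert (Hc : cos (acos v) = v) by (apply cos_acos; lra).
  generalize (acos_bound v); intros [H0 H1]. generalize PI_gt3; intros HP.
  split; auto. split.
  - destruct (Rle_lt_dec (acos v) (PI/3)) as [Hle|Hlt]; auto.
    exfalso. destruct (Req_dec (acos v) (PI/3)) as [E|E].
    + rewrite E, cos_PI3 in Hc. lra.
    + assert (cos (PI/3) < cos (acos v)) by (apply cos_decreasing_1; lra).
      rewrite cos_PI3 in H. lra.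
  - destruct (Rle_lt_dec (PI/2) (acos v)) as [Hle|Hlt]; auto.
    exfalso. destruct (Req_dec (acos v) (PI/2)) as [E|E].
    + rewrite E, cos_PI2 in Hc. lra.
    + assert (cos (acos v) < cos (PI/2)) by (apply cos_decreasing_1; lra).
      rewrite cos_PI2 in H. lra.
Qed.

Definition Ta := tan (aa/2).

Lemma Ta_prop : 0 < Ta /\ Ta^2 = 1/kk.
Proof.
  destruct aa_prop as [Hc Hb]. generalize PI_gt3; intros HP.
  assert (Hc2 : 0 < cos (aa/2)) by (apply cos_gt_0; lra).
  split.
  - unfold Ta, tan. apply Rdiv_lt_0_compat; auto. apply sin_gt_0; lra.
  - unfold Ta. rewrite tan_half_sq; try lra. rewrite Hc. unfold kk. field. lra.
Qed.

Lemma K1_aa : K1 v aa = aa.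
Proof.
  destruct aa_prop as [Hc Hb]. destruct Ta_prop as [HT HT2]. generalize PI_gt3; intros HP.
  generalize kk_bounds; intros Hk.
  unfold K1. fold kk. fold Ta.
  assert (E : kk * Ta = / Ta).
  { apply (Rmult_eq_reg_r Ta); [|lra]. rewrite Rinv_l by lra.
    replace (kk * Ta * Ta) with (kk * Ta^2) by ring. rewrite HT2. field. lra. }
  rewrite E, atan_inv by lra. unfold Ta. rewrite atan_tan by lra. field.
Qed.

Lemma K1_maa : K1 v (-aa) = 2*PI - aa.
Proof. rewrite K1_neg, K1_aa. ring. Qed.

Lemma atan_expand : forall S lam s1 s2, 0 < S -> lam <= kk ->
  lam * (1 + kk^2 * S^2) <= kk * (1 + S^2) ->
  -S <= s1 -> s1 <= s2 -> s2 <= S ->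
  lam * (atan s2 - atan s1) <= atan (kk * s2) - atan (kk * s1).
Proof.
  intros S lam s1 s2 HS Hl1 Hl2 H1 H12 H2.
  destruct (Req_dec s1 s2) as [E|E]. { subst. lra. }
  set (g := fun s => atan (kk * s) - lam * atan s).
  assert (Hd : forall c, s1 <= c <= s2 -> derivable_pt_lim g c (kk / (1 + (kk*c)^2) - lam / (1 + c^2))).
  { intros c Hc. apply is_derive_Reals. unfold g. auto_derive; auto. field.
    split; nra. }
  destruct (MVT_cor2 g _ s1 s2 ltac:(lra) Hd) as [c [Hc1 Hc2]].
  assert (Hpos : 0 <= kk / (1 + (kk*c)^2) - lam / (1 + c^2)).
  { assert (P1 : 0 < 1 + (kk*c)^2) by nra. assert (P2 : 0 < 1 + c^2) by nra.
    assert (Hcs : c^2 <= S^2) by nra.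
    assert (Q : 0 <= kk * (1 + c^2) - lam * (1 + (kk * c)^2)).
    { assert (0 < S^2) by nra.
      assert (S^2 * (kk * (1 + c^2) - lam * (1 + (kk * c)^2)) =
              (S^2 - c^2) * (kk - lam) + c^2 * (kk * (1 + S^2) - lam * (1 + kk^2 * S^2))) by ring.
      assert (0 <= (S^2 - c^2) * (kk - lam)) by (apply Rmult_le_pos; lra).
      assert (0 <= c^2 * (kk * (1 + S^2) - lam * (1 + kk^2 * S^2))) by (apply Rmult_le_pos; nra).
      nra. }
    replace (kk / (1 + (kk * c) ^ 2) - lam / (1 + c ^ 2)) with
      ((kk * (1 + c^2) - lam * (1 + (kk * c)^2)) / ((1 + (kk*c)^2) * (1 + c^2))) by (field; lra).
    apply Rdiv_le_0_compat; nra. }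
  unfold g in Hc1. nra.
Qed.

Lemma tan_half_mono : forall x y, -PI < x -> x <= y -> y < PI -> tan (x/2) <= tan (y/2).
Proof.
  intros x y Hx Hxy Hy. destruct (Req_dec x y) as [E|E]; [subst; lra|].
  left. apply tan_increasing; lra.
Qed.

Lemma K1_expand : forall S lam x y, 0 < S -> lam <= kk ->
  lam * (1 + kk^2 * S^2) <= kk * (1 + S^2) ->
  -PI < x -> x <= y -> y < PI -> -S <= tan (x/2) -> tan (y/2) <= S ->
  lam * (y - x) <= K1 v x - K1 v y.
Proof.
  intros S lam x y HS Hl1 Hl2 Hx Hxy Hy H1 H2.
  rewrite <- (atan_tan_half x) at 1 by lra. rewrite <- (atan_tan_half y) at 1 by lra.
  unfold K1. fold kk.
  assert (lam * (atan (tan (y/2)) - atan (tan (x/2))) <= atan (kk * tan (y/2)) - atan (kk * tan (x/2))).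
  { apply (atan_expand S); auto. apply tan_half_mono; lra. }
  lra.
Qed.

Lemma K1_E1 : forall x y, -aa <= x -> x <= y -> y <= aa -> y - x <= K1 v x - K1 v y.
Proof.
  intros x y Hx Hxy Hy. destruct aa_prop as [Hc Hb]. destruct Ta_prop as [HT HT2].
  generalize PI_gt3; intros HP. generalize kk_bounds; intros Hk.
  replace (y - x) with (1 * (y - x)) by ring.
  apply (K1_expand Ta); try lra.
  - rewrite HT2. field_simplify; lra.
  - unfold Ta. replace (-aa/2) with (-aa/2) by auto.
    replace (- tan (aa/2)) with (tan (-aa/2)). 2:{ replace (-aa/2) with (-(aa/2)) by field. apply tan_neg. }
    apply tan_half_mono; lra.
  - apply tan_half_mono; lra.
Qed.

Definition cc := (PI/3 + aa)/2.
Definition Sc := tan (cc/2).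
Definition lamc := kk * (1 + Sc^2) / (1 + kk^2 * Sc^2).

Lemma lamc_prop : 1 < lamc /\ lamc <= kk /\ 0 < Sc.
Proof.
  destruct aa_prop as [Hc Hb]. destruct Ta_prop as [HT HT2].
  generalize PI_gt3; intros HP. generalize kk_bounds; intros Hk.
  assert (HS : 0 < Sc).
  { unfold Sc, cc, tan. apply Rdiv_lt_0_compat; [apply sin_gt_0|apply cos_gt_0]; lra. }
  assert (HST : Sc < Ta) by (unfold Sc, Ta, cc; apply tan_increasing; lra).
  assert (HS2 : Sc^2 < 1/kk) by (rewrite <- HT2; nra).
  assert (kk * Sc^2 < 1).
  { apply (Rmult_lt_compat_l kk) in HS2; [|lra]. replace (kk * (1/kk)) with 1 in HS2 by (field; lra). lra. }
  assert (0 < (kk - 1) * (1 - kk * Sc^2)) by (apply Rmult_lt_0_compat; lra).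
  unfold lamc. split; [|split]; auto.
  - apply (Rmult_lt_reg_r (1 + kk^2 * Sc^2)); [nra|]. field_simplify; [nra|nra].
  - assert (0 <= kk * Sc^2 * (kk^2 - 1)) by (apply Rmult_le_pos; nra).
    apply (Rmult_le_reg_r (1 + kk^2 * Sc^2)); [nra|]. field_simplify; nra.
Qed.

Lemma K1_Ec : forall x y, -cc <= x -> x <= y -> y <= cc -> lamc * (y - x) <= K1 v x - K1 v y.
Proof.
  intros x y Hx Hxy Hy. destruct aa_prop as [Hc Hb]. destruct lamc_prop as [H1 [H2 H3]].
  generalize PI_gt3; intros HP. generalize kk_bounds; intros Hk.
  apply (K1_expand Sc); try lra; unfold cc in *; try lra.
  - unfold lamc. right. field. nra.
  - unfold Sc. replace (- tan (cc/2)) with (tan (-cc/2)). 2:{ replace (-cc/2) with (-(cc/2)) by field. apply tan_neg. }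
    apply tan_half_mono; unfold cc; lra.
  - unfold Sc. apply tan_half_mono; unfold cc; lra.
Qed.

End Ana.

Lemma cos_2PI3 : cos (2*PI/3) = -1/2.
Proof. replace (2*PI/3) with (PI - PI/3) by field. rewrite Rtrigo_facts.cos_pi_minus, cos_PI3. field. Qed.
Lemma sin_2PI3 : sin (2*PI/3) = sqrt 3 / 2.
Proof. replace (2*PI/3) with (PI - PI/3) by field. rewrite sin_PI_x, sin_PI3. auto. Qed.
Lemma cos_4PI3 : cos (4*PI/3) = -1/2.
Proof. replace (4*PI/3) with (PI/3 + PI) by field. rewrite neg_cos, cos_PI3. field. Qed.
Lemma sin_4PI3 : sin (4*PI/3) = - (sqrt 3 / 2).
Proof. replace (4*PI/3) with (PI/3 + PI) by field. rewrite neg_sin, sin_PI3. auto. Qed.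

Definition th (j : Z) := 2*PI*IZR j/3.

Section Steps.
Variable v : R.
Hypothesis Hv : 0 < v < 1/2.

Definition B (j : Z) (x : R) := K1 v (x - th j) + th j.

Definition Path (n : nat) (z y : R) :=
  exists (om : nat -> symbol) (k : Z), Kiter v om n z = y + 2*PI*IZR k.

Lemma Path_0 : forall z, Path 0 z z.
Proof. intros z. exists (fun _ => (true,true,true)), 0%Z. simpl. ring. Qed.

Lemma Path_shift : forall n z y (m : Z), Path n z y -> Path n z (y + 2*PI*IZR m).
Proof.
  intros n z y m [om [k H]]. exists om, (k - m)%Z. rewrite H, minus_IZR. ring.
Qed.

Lemma Path_shift' : forall n z y (m : Z), Path n z (y + 2*PI*IZR m) -> Path n z y.
Proof.
  intros n z y m H. apply (Path_shift _ _ _ (-m)) in H. rewrite opp_IZR in H.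
  replace (y + 2 * PI * IZR m + 2 * PI * - IZR m) with y in H by ring. auto.
Qed.

Lemma Kiter_shift : forall om n z (k : Z), exists k' : Z,
  Kiter v om n (z + 2*PI*IZR k) = Kiter v om n z + 2*PI*IZR k'.
Proof.
  intros om n z k. induction n as [|n IH].
  - exists k. reflexivity.
  - destruct IH as [k' IH]. exists 0%Z. simpl. rewrite IH, Kmap_per. ring.
Qed.

Lemma Path_comp : forall n m z y w, Path n z y -> Path m y w -> Path (n + m) z w.
Proof.
  intros n m z y w [om1 [k1 H1]] [om2 [k2 H2]].
  set (om := fun i => if Nat.ltb i n then om1 i else om2 (i - n)%nat).
  assert (A : forall i, (i <= n)%nat -> Kiter v om i z = Kiter v om1 i z).
  { intros i Hi. induction i as [|i IH]; [reflexivity|].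
    simpl. rewrite IH by lia. unfold om. replace (Nat.ltb i n) with true; auto.
    symmetry. apply Nat.ltb_lt. lia. }
  assert (Bq : forall i, Kiter v om (n + i) z = Kiter v om2 i (Kiter v om1 n z)).
  { intros i. induction i as [|i IH].
    - rewrite Nat.add_0_r. apply A. lia.
    - replace (n + S i)%nat with (S (n + i)) by lia. simpl. rewrite IH. unfold om.
      replace (Nat.ltb (n + i) n) with false by (symmetry; apply Nat.ltb_ge; lia).
      replace (n + i - n)%nat with i by lia. reflexivity. }
  exists om. rewrite Bq, H1. destruct (Kiter_shift om2 m y k1) as [k' Hk]. rewrite Hk, H2.
  exists (k2 + k')%Z. rewrite plus_IZR. ring.
Qed.

Lemma Kmap_Path : forall s x y (k : Z), Kmap v s x = y + 2*PI*IZR k -> Path 1 x y.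
Proof. intros s x y k H. exists (fun _ => s), k. simpl. auto. Qed.

Lemma no_triple : forall x, v <= cos x -> v <= - (cos x + sqrt 3 * sin x) / 2 ->
  v <= - (cos x - sqrt 3 * sin x) / 2 -> False.
Proof. intros x H1 H2 H3. lra. Qed.

Lemma cos_th1 : forall x, cos (x - th 1) = - (cos x - sqrt 3 * sin x) / 2.
Proof. intros x. unfold th. replace (2 * PI * IZR 1 / 3) with (2*PI/3) by (simpl; field).
  rewrite cos_minus, cos_2PI3, sin_2PI3. field. Qed.
Lemma cos_th2 : forall x, cos (x - th 2) = - (cos x + sqrt 3 * sin x) / 2.
Proof. intros x. unfold th. replace (2 * PI * IZR 2 / 3) with (4*PI/3) by (simpl; field).
  rewrite cos_minus, cos_4PI3, sin_4PI3. field. Qed.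

Lemma Step0 : forall x, v <= cos (x - th 0) -> Path 1 x (B 0 x).
Proof.
  intros x H. unfold th in H. simpl in H. replace (x - 2 * PI * 0 / 3) with x in H by field.
  apply (Kmap_Path (true,true,true) _ _ 0). unfold B, th, Kmap, Kmu, Knu, Kzeta, Splus, Sminus. simpl.
  replace (x - 2 * PI * 0 / 3) with x by field.
  destruct (Rle_dec v (cos x)); [|lra].
  destruct (Rle_dec v (- (cos x + sqrt 3 * sin x) / 2));
  [|destruct (Rle_dec v (- (cos x - sqrt 3 * sin x) / 2))]; field.
Qed.

Lemma Step1 : forall x, v <= cos (x - th 1) -> Path 1 x (B 1 x).
Proof.
  intros x H. rewrite cos_th1 in H.
  apply (Kmap_Path (true,false,false) _ _ 0). unfold B, th, Kmap, Kmu, Knu, Kzeta, Splus, Sminus, K3. simpl.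
  replace (2 * PI * 1 / 3) with (2*PI/3) by field.
  destruct (Rle_dec v (cos x)).
  - destruct (Rle_dec v (- (cos x + sqrt 3 * sin x) / 2)).
    + exfalso; eapply no_triple; eauto.
    + destruct (Rle_dec v (- (cos x - sqrt 3 * sin x) / 2)); [ring|lra].
  - destruct (Rle_dec v (- (cos x + sqrt 3 * sin x) / 2)).
    + destruct (Rle_dec v (- (cos x - sqrt 3 * sin x) / 2)); [ring|lra].
    + ring.
Qed.

Lemma Step2 : forall x, v <= cos (x - th 2) -> Path 1 x (B 2 x).
Proof.
  intros x H. rewrite cos_th2 in H.
  apply (Kmap_Path (false,true,true) _ _ (-1)). unfold B, th, Kmap, Kmu, Knu, Kzeta, Splus, Sminus, K2. simpl.
  replace (x - 2 * PI * 2 / 3) with ((x + 2*PI/3) + 2*PI*IZR (-1)) by (simpl; field).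
  rewrite K1_per.
  destruct (Rle_dec v (cos x)).
  - destruct (Rle_dec v (- (cos x + sqrt 3 * sin x) / 2)); [simpl; field|lra].
  - destruct (Rle_dec v (- (cos x + sqrt 3 * sin x) / 2)); [|lra].
    destruct (Rle_dec v (- (cos x - sqrt 3 * sin x) / 2)); simpl; field.
Qed.

Lemma th_split : forall q r : Z, th (3*q + r) = th r + 2*PI*IZR q.
Proof. intros q r. unfold th. rewrite plus_IZR, mult_IZR. simpl. field. Qed.

Lemma B_split : forall q r x, B (3*q + r) x = B r x + 2*PI*IZR q.
Proof.
  intros q r x. unfold B. rewrite th_split.
  replace (x - (th r + 2 * PI * IZR q)) with ((x - th r) + 2*PI*IZR (-q)) by (rewrite opp_IZR; ring).
  rewrite K1_per. ring.
Qed.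

Lemma Step : forall j x, v <= cos (x - th j) -> Path 1 x (B j x).
Proof.
  intros j x H.
  pose proof (Z.div_mod j 3 ltac:(lia)) as E.
  set (q := (j / 3)%Z) in *. set (r := (j mod 3)%Z) in *.
  assert (Hr : (0 <= r < 3)%Z) by (apply Z.mod_pos_bound; lia).
  rewrite E in H |- *. rewrite B_split. apply Path_shift.
  rewrite th_split in H.
  replace (x - (th r + 2 * PI * IZR q)) with ((x - th r) + 2*PI*IZR (-q)) in H by (rewrite opp_IZR; ring).
  destruct (cos_sin_perZ (x - th r) (-q)) as [Hc _]. rewrite Hc in H.
  assert (r = 0%Z \/ r = 1%Z \/ r = 2%Z) as [R|[R|R]] by lia; rewrite R in *.
  - apply Step0; auto.
  - apply Step1; auto.
  - apply Step2; auto.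
Qed.

Lemma dom_cos : forall j x, Rabs (x - th j) <= aa v -> v <= cos (x - th j).
Proof.
  intros j x H. destruct (aa_prop v Hv) as [Hc Hb]. generalize PI_gt3; intros HP.
  rewrite <- Hc.
  assert (E : cos (x - th j) = cos (Rabs (x - th j))).
  { destruct (Rle_or_lt 0 (x - th j)); [rewrite Rabs_right by lra; auto|].
    rewrite Rabs_left by lra. rewrite cos_neg. auto. }
  rewrite E. destruct (Req_dec (Rabs (x - th j)) (aa v)) as [E'|E']; [rewrite E'; lra|].
  left. apply cos_decreasing_1; try lra. apply Rabs_pos.
Qed.
End Steps.

Definition mono (F : R -> R) x y :=
  (forall z1 z2, x <= z1 -> z1 < z2 -> z2 <= y -> F z1 < F z2) \/
  (forall z1 z2, x <= z1 -> z1 < z2 -> z2 <= y -> F z2 < F z1).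

Section AMs.
Variable v : R.
Hypothesis Hv : 0 < v < 1/2.

Definition AM n x y F := x < y /\ (forall z, x <= z <= y -> continuity_pt F z) /\ mono F x y /\
  (forall z, x <= z <= y -> Path v n z (F z)).

Lemma AM_between : forall n x y F z, AM n x y F -> x <= z <= y ->
  Rmin (F x) (F y) <= F z <= Rmax (F x) (F y).
Proof.
  intros n x y F z [Hxy [_ [Hm _]]] Hz.
  unfold Rmin, Rmax. destruct (Rle_dec (F x) (F y)) as [Hle|Hle];
  destruct Hm as [Hm|Hm];
  (destruct (Req_dec z x) as [Ex|Ex]; [subst; lra|]);
  (destruct (Req_dec z y) as [Ey|Ey]; [subst; lra|]);
  assert (A1 := Hm x z ltac:(lra) ltac:(lra) ltac:(lra));
  assert (A2 := Hm z y ltac:(lra) ltac:(lra) ltac:(lra)); lra.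
Qed.

Lemma AM_lt : forall n x y F, AM n x y F -> Rmin (F x) (F y) < Rmax (F x) (F y).
Proof.
  intros n x y F [Hxy [_ [Hm _]]]. unfold Rmin, Rmax.
  destruct Hm as [Hm|Hm]; assert (A := Hm x y ltac:(lra) Hxy ltac:(lra));
  destruct (Rle_dec (F x) (F y)); lra.
Qed.

Lemma AM_surj : forall n x y F c, AM n x y F -> Rmin (F x) (F y) <= c <= Rmax (F x) (F y) ->
  exists z, x <= z <= y /\ F z = c.
Proof.
  intros n x y F c [Hxy [Hc _]] Hb. apply ivt_gen; auto. lra.
  unfold Rmin, Rmax in Hb. destruct (Rle_dec (F x) (F y)); lra.
Qed.

Lemma AM_shift : forall n x y F (m : Z), AM n x y F -> AM n x y (fun z => F z + 2*PI*IZR m).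
Proof.
  intros n x y F m [Hxy [Hc [Hm Hp]]]. split; [|split; [|split]]; auto.
  - intros z Hz. apply continuity_pt_plus; [auto| apply continuity_pt_const; intros u w; auto].
  - destruct Hm as [Hm|Hm]; [left|right]; intros z1 z2 H1 H2 H3; specialize (Hm z1 z2 H1 H2 H3); lra.
  - intros z Hz. apply Path_shift. auto.
Qed.

Lemma AM_id : forall x y, x < y -> AM 0 x y (fun z => z).
Proof.
  intros x y Hxy. split; [|split; [|split]]; auto.
  - intros z _. apply continuity_pt_id.
  - left. intros; lra.
  - intros z _. apply Path_0.
Qed.

Lemma AM_sub : forall n x y F x' y', AM n x y F -> x <= x' -> x' < y' -> y' <= y -> AM n x' y' F.
Proof.
  intros n x y F x' y' [Hxy [Hc [Hm Hp]]] H1 H2 H3. split; [|split; [|split]]; auto.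
  - intros z Hz; apply Hc; lra.
  - destruct Hm as [Hm|Hm]; [left|right]; intros z1 z2 A1 A2 A3; apply Hm; lra.
  - intros z Hz; apply Hp; lra.
Qed.

Lemma B_cont : forall j w, Rabs (w - th j) <= aa v -> continuity_pt (B v j) w.
Proof.
  intros j w H. destruct (aa_prop v Hv) as [_ Hb]. generalize PI_gt3; intros HP.
  unfold B. apply continuity_pt_plus; [|apply continuity_pt_const; intros u u'; auto].
  apply (continuity_pt_comp (fun w => w - th j) (K1 v)).
  - apply continuity_pt_minus; [apply continuity_pt_id| apply continuity_pt_const; intros u u'; auto].
  - apply K1_cont. apply Rabs_le_between in H. lra.
Qed.

Lemma B_decr : forall j w1 w2, th j - aa v <= w1 -> w1 < w2 -> w2 <= th j + aa v -> B v j w2 < B v j w1.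
Proof.
  intros j w1 w2 H1 H2 H3. destruct (aa_prop v Hv) as [_ Hb]. generalize PI_gt3; intros HP.
  unfold B. assert (K1 v (w2 - th j) < K1 v (w1 - th j)) by (apply K1_decr; lra). lra.
Qed.

Lemma AM_branch : forall n x y F j, AM n x y F ->
  (forall z, x <= z <= y -> Rabs (F z - th j) <= aa v) ->
  AM (S n) x y (fun z => B v j (F z)).
Proof.
  intros n x y F j HA Hd. destruct HA as [Hxy [Hc [Hm Hp]]].
  split; [|split; [|split]]; auto.
  - intros z Hz. apply (continuity_pt_comp F (B v j)); auto. apply B_cont. auto.
  - assert (D : forall z, x <= z <= y -> th j - aa v <= F z <= th j + aa v).
    { intros z Hz. specialize (Hd z Hz). apply Rabs_le_between in Hd. lra. }
    destruct Hm as [Hm|Hm]; [right|left]; intros z1 z2 H1 H2 H3; specialize (Hm z1 z2 H1 H2 H3);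
    apply B_decr; auto; try apply D; lra.
  - intros z Hz. replace (S n) with (n + 1)%nat by lia. apply Path_comp with (F z); auto.
    apply Step; auto. apply dom_cos; auto.
Qed.

Lemma B_img : forall n x y F j, AM n x y F ->
  (forall z, x <= z <= y -> Rabs (F z - th j) <= aa v) ->
  Rmin (B v j (F x)) (B v j (F y)) = B v j (Rmax (F x) (F y)) /\
  Rmax (B v j (F x)) (B v j (F y)) = B v j (Rmin (F x) (F y)).
Proof.
  intros n x y F j HA Hd.
  assert (Dx := Hd x ltac:(destruct HA; lra)). assert (Dy := Hd y ltac:(destruct HA; lra)).
  apply Rabs_le_between in Dx. apply Rabs_le_between in Dy.
  assert (L := AM_lt _ _ _ _ HA). unfold Rmin, Rmax in *.
  destruct (Rle_dec (F x) (F y)) as [H|H].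
  - assert (F x < F y) by lra. assert (B v j (F y) < B v j (F x)) by (apply B_decr; lra).
    destruct (Rle_dec (B v j (F x)) (B v j (F y))); [lra|]. split; auto.
  - assert (F y < F x) by lra. assert (B v j (F x) < B v j (F y)) by (apply B_decr; lra).
    destruct (Rle_dec (B v j (F x)) (B v j (F y))); [|lra]. split; auto.
Qed.

End AMs.

Lemma th_S : forall j, th (j + 1) = th j + 2*PI/3.
Proof. intros j. unfold th. rewrite plus_IZR. simpl. field. Qed.

Lemma bernoulli : forall m N, 1 <= m -> 1 + INR N * (m - 1) <= m ^ N.
Proof.
  intros m N Hm. induction N as [|N IH].
  - simpl. lra.
  - rewrite S_INR. simpl. assert (0 <= INR N) by apply pos_INR.
    assert (m * (1 + INR N * (m-1)) <= m * m^N) by (apply Rmult_le_compat_l; lra).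
    assert (0 <= INR N * (m - 1) * (m - 1)) by (apply Rmult_le_pos; [apply Rmult_le_pos|]; lra).
    nra.
Qed.

Section Growth.
Variable v : R.
Hypothesis Hv : 0 < v < 1/2.

Definition WW := 2 * aa v - 2*PI/3.
Definition gg := (lamc v - 1) * (cc v - PI/3).
Definition mu := Rmin (lamc v) (1 + gg / (2*PI)).

Definition len (F : R -> R) x y := Rmax (F x) (F y) - Rmin (F x) (F y).

Definition Stop (F : R -> R) x y := exists j,
  Rmin (F x) (F y) <= th j + 2*PI/3 - aa v /\ th j + aa v <= Rmax (F x) (F y).

Lemma mu_gt1 : 1 < mu.
Proof.
  destruct (lamc_prop v Hv) as [H1 _]. destruct (aa_prop v Hv) as [_ Hb].
  generalize PI_gt3; intros HP.
  assert (0 < gg) by (unfold gg, cc; apply Rmult_lt_0_compat; lra).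
  unfold mu. apply Rmin_glb_lt; auto.
  assert (0 < gg / (2*PI)) by (apply Rdiv_lt_0_compat; lra). lra.
Qed.

Lemma dichotomy : forall n x y F, AM v n x y F ->
  Stop F x y \/
  (exists G, AM v (S n) x y G /\ mu * len F x y <= len G x y /\ len F x y <= 2 * aa v).
Proof.
  intros n x y F HA.
  destruct (aa_prop v Hv) as [_ Hb]. generalize PI_gt3; intros HP.
  destruct (lamc_prop v Hv) as [Hl1 [Hl2 HS]].
  assert (Hcc : PI/3 < cc v < aa v) by (unfold cc; lra).
  set (lo := Rmin (F x) (F y)). set (hi := Rmax (F x) (F y)).
  assert (Llh : lo < hi) by apply (AM_lt _ _ _ _ _ HA).
  set (r := (lo + PI/3) / (2*PI/3)).
  destruct (archimed r) as [A1 A2].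
  set (j := (up r - 1)%Z).
  assert (Hth : th j = 2*PI/3 * (IZR (up r) - 1)) by (unfold th, j; rewrite minus_IZR; simpl; field).
  assert (Hr : r * (2*PI/3) = lo + PI/3) by (unfold r; field; lra).
  assert (C1 : -PI/3 <= lo - th j) by (rewrite Hth; nra).
  assert (C2 : lo - th j < PI/3) by (rewrite Hth; nra).
  set (c' := lo - th j) in *. set (d' := hi - th j).
  assert (Hcd : c' < d') by (unfold c', d'; lra).
  assert (HB : forall z, x <= z <= y -> lo <= F z <= hi) by (intros z Hz; apply (AM_between _ _ _ _ _ _ HA Hz)).
  assert (Hxy : x < y) by (destruct HA; lra).
  assert (Grow : forall j', (forall z, x <= z <= y -> Rabs (F z - th j') <= aa v) ->
      mu * (hi - lo) <= K1 v (lo - th j') - K1 v (hi - th j') ->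
      exists G, AM v (S n) x y G /\ mu * len F x y <= len G x y /\ len F x y <= 2 * aa v).
  { intros j' Hd Hg. exists (fun z => B v j' (F z)). split; [apply AM_branch; auto|].
    destruct (B_img v Hv _ _ _ _ j' HA Hd) as [E1 E2]. unfold len. rewrite E1, E2. fold lo hi.
    split; [unfold B; lra|].
    assert (Dl := Hd x ltac:(lra)). assert (Dh := Hd y ltac:(lra)).
    apply Rabs_le_between in Dl. apply Rabs_le_between in Dh.
    unfold lo, hi, Rmin, Rmax in *. destruct (Rle_dec (F x) (F y)); lra. }
  assert (Hmu1 : mu <= lamc v) by apply Rmin_l.
  assert (Hmu2 : mu <= 1 + gg / (2*PI)) by apply Rmin_r.
  assert (Hgg : 0 < gg) by (unfold gg; apply Rmult_lt_0_compat; lra).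
  destruct (Rle_lt_dec d' (cc v)) as [D1|D1].
  -
    right. apply (Grow j).
    + intros z Hz. apply Rabs_le_between. specialize (HB z Hz). unfold c', d' in *. lra.
    + fold c' d'. assert (lamc v * (d' - c') <= K1 v c' - K1 v d') by (apply K1_Ec; auto; lra).
      assert (hi - lo = d' - c') by (unfold c', d'; ring).
      assert (mu * (d' - c') <= lamc v * (d' - c')) by (apply Rmult_le_compat_r; lra).
      rewrite H0. lra.
  - destruct (Rlt_le_dec c' (2*PI/3 - aa v)) as [C3|C3].
    + destruct (Rlt_le_dec (aa v) d') as [D2|D2].
      * left. exists j. unfold c', d' in *. fold lo hi. lra.
      * right. apply (Grow j).
        -- intros z Hz. apply Rabs_le_between. specialize (HB z Hz). unfold c', d' in *. lra.
        -- fold c' d'.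
           assert (lamc v * (cc v - c') <= K1 v c' - K1 v (cc v)) by (apply K1_Ec; auto; lra).
           assert (d' - cc v <= K1 v (cc v) - K1 v d') by (apply K1_E1; auto; lra).
           assert (hi - lo = d' - c') by (unfold c', d'; ring).
           assert (hi - lo <= 2*PI) by lra.
           assert (gg <= (lamc v - 1) * (cc v - c')) by (unfold gg; apply Rmult_le_compat_l; lra).
           assert (mu * (hi - lo) <= (1 + gg/(2*PI)) * (hi - lo)) by (apply Rmult_le_compat_r; lra).
           assert ((gg / (2*PI)) * (hi - lo) <= gg) by
             (unfold Rdiv; rewrite Rmult_assoc; rewrite <- (Rmult_1_r gg) at 2; apply Rmult_le_compat_l; [lra|];
              apply (Rmult_le_reg_l (2*PI)); [lra|]; field_simplify; lra).
           assert ((lamc v - 1) * (cc v - c') = lamc v * (cc v - c') - (cc v - c')) by ring.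
           lra.
    + destruct (Rlt_le_dec (2*PI/3 + aa v) d') as [D2|D2].
      * left. exists (j + 1)%Z. rewrite th_S. unfold c', d' in *. fold lo hi. lra.
      * right. apply (Grow (j + 1)%Z).
        -- intros z Hz. apply Rabs_le_between. specialize (HB z Hz). rewrite th_S. unfold c', d' in *. lra.
        -- rewrite th_S.
           replace (lo - (th j + 2 * PI / 3)) with (c' - 2*PI/3) by (unfold c'; ring).
           replace (hi - (th j + 2 * PI / 3)) with (d' - 2*PI/3) by (unfold d'; ring).
           assert (-PI/3 - (c' - 2*PI/3) <= K1 v (c' - 2*PI/3) - K1 v (-PI/3)) by (apply K1_E1; auto; lra).
           assert (lamc v * ((cc v - 2*PI/3) - (-PI/3)) <= K1 v (-PI/3) - K1 v (cc v - 2*PI/3)) by (apply K1_Ec; auto; lra).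
           assert ((d' - 2*PI/3) - (cc v - 2*PI/3) <= K1 v (cc v - 2*PI/3) - K1 v (d' - 2*PI/3)) by (apply K1_E1; auto; lra).
           assert (hi - lo = d' - c') by (unfold c', d'; ring).
           assert (hi - lo <= 2*PI) by lra.
           assert (mu * (hi - lo) <= (1 + gg/(2*PI)) * (hi - lo)) by (apply Rmult_le_compat_r; lra).
           assert ((gg / (2*PI)) * (hi - lo) <= gg) by
             (unfold Rdiv; rewrite Rmult_assoc; rewrite <- (Rmult_1_r gg) at 2; apply Rmult_le_compat_l; [lra|];
              apply (Rmult_le_reg_l (2*PI)); [lra|]; field_simplify; lra).
           unfold gg in *. nra.
Qed.

Lemma grow : forall N n x y F, AM v n x y F -> 2*PI <= len F x y * mu ^ N ->
  exists n' G, (n <= n')%nat /\ AM v n' x y G /\ Stop G x y.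
Proof.
  destruct (aa_prop v Hv) as [_ Hb]. generalize PI_gt3; intros HP.
  assert (Hm := mu_gt1).
  induction N as [|N IH]; intros n x y F HA HL.
  - destruct (dichotomy n x y F HA) as [S|[G [_ [_ H]]]].
    + exists n, F; auto.
    + simpl in HL. lra.
  - destruct (dichotomy n x y F HA) as [S|[G [HG [H1 H2]]]].
    + exists n, F; auto.
    + assert (0 <= mu ^ N) by (apply pow_le; lra).
      destruct (IH (S n) x y G HG) as [n' [G' [Hn [HG' HS]]]].
      * simpl in HL. nra.
      * exists n', G'. split; [lia|auto].
Qed.

Lemma claimF : forall x y, x < y -> y - x < WW ->
  exists n G, (1 <= n)%nat /\ AM v n x y G /\ Stop G x y.
Proof.
  intros x y Hxy HW.
  destruct (aa_prop v Hv) as [_ Hb]. generalize PI_gt3; intros HP.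
  assert (Hm := mu_gt1).
  destruct (dichotomy 0 x y (fun z => z) (AM_id v x y Hxy)) as [[j [S1 S2]]|[G [HG [H1 H2]]]].
  - exfalso. unfold Rmin, Rmax in *. destruct (Rle_dec x y); unfold WW in HW; lra.
  - assert (L0 : len (fun z => z) x y = y - x) by (unfold len, Rmin, Rmax; destruct (Rle_dec x y); lra).
    rewrite L0 in H1.
    assert (LG : 0 < len G x y) by nra.
    set (N := Z.to_nat (up (2*PI / (len G x y * (mu - 1))))).
    assert (HN : 2*PI / (len G x y * (mu - 1)) <= INR N).
    { unfold N. destruct (archimed (2*PI / (len G x y * (mu - 1)))) as [A1 A2].
      assert (0 < 2*PI / (len G x y * (mu - 1))) by (apply Rdiv_lt_0_compat; nra).
      rewrite INR_IZR_INZ, Z2Nat.id; [lra|]. apply le_IZR. lra. }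
    destruct (grow N 1 x y G HG) as [n' [G' [Hn [HG' HS]]]].
    + assert (B := bernoulli mu N ltac:(lra)).
      assert (2*PI <= len G x y * (INR N * (mu - 1))).
      { apply (Rmult_le_compat_r (len G x y * (mu - 1))) in HN; [|nra].
        replace (2 * PI / (len G x y * (mu - 1)) * (len G x y * (mu - 1))) with (2*PI) in HN by (field; nra).
        nra. }
      nra.
    + exists n', G'. auto.
Qed.

End Growth.

Lemma Rmin_plus_c : forall a b c, Rmin (a + c) (b + c) = Rmin a b + c.
Proof. intros. unfold Rmin. destruct (Rle_dec (a + c) (b + c)), (Rle_dec a b); lra. Qed.
Lemma Rmax_plus_c : forall a b c, Rmax (a + c) (b + c) = Rmax a b + c.
Proof. intros. unfold Rmax. destruct (Rle_dec (a + c) (b + c)), (Rle_dec a b); lra. Qed.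

Section Dens.
Variable v : R.
Hypothesis Hv : 0 < v < 1/2.

Definition Cov (r : Z) (y rho : R) := exists n z1 z2 H,
  th r + 2*PI/3 - aa v <= z1 /\ z2 <= th r + aa v /\ AM v n z1 z2 H /\
  Rmin (H z1) (H z2) <= y - rho /\ y + rho <= Rmax (H z1) (H z2).

Definition Dd r y := exists rho, 0 < rho /\ Cov r y rho.

Definition Dense r y := forall eps, 0 < eps -> exists d, Rabs (d - y) < eps /\ Dd r d.

Lemma Dd_shift : forall r y (m : Z), Dd r y -> Dd r (y + 2*PI*IZR m).
Proof.
  intros r y m [rho [Hr [n [z1 [z2 [H [A1 [A2 [A3 [A4 A5]]]]]]]]]].
  exists rho; split; auto. exists n, z1, z2, (fun z => H z + 2*PI*IZR m).
  split; [|split; [|split]]; auto.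
  - apply AM_shift; auto.
  - rewrite Rmin_plus_c, Rmax_plus_c. lra.
Qed.

Lemma Dense_shift : forall r y (m : Z), Dense r y -> Dense r (y + 2*PI*IZR m).
Proof.
  intros r y m HD eps He. destruct (HD eps He) as [d [Hd1 Hd2]].
  exists (d + 2*PI*IZR m). split.
  - replace (d + 2 * PI * IZR m - (y + 2 * PI * IZR m)) with (d - y) by ring. auto.
  - apply Dd_shift; auto.
Qed.

Lemma Dd_base : forall r y, th r + 2*PI/3 - aa v < y < th r + aa v -> Dd r y.
Proof.
  intros r y Hy. exists (Rmin (y - (th r + 2*PI/3 - aa v)) (th r + aa v - y)).
  split. { apply Rmin_glb_lt; lra. }
  exists 0%nat, (th r + 2*PI/3 - aa v), (th r + aa v), (fun z => z).
  split; [lra|split; [lra|split]].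
  - apply AM_id. lra.
  - assert (M1 := Rmin_l (y - (th r + 2*PI/3 - aa v)) (th r + aa v - y)).
    assert (M2 := Rmin_r (y - (th r + 2*PI/3 - aa v)) (th r + aa v - y)).
    cbv beta. rewrite Rmin_left, Rmax_right by lra. lra.
Qed.

Lemma Dd_branch : forall r i y, Dd r y -> Rabs (y - th i) < aa v -> Dd r (B v i y).
Proof.
  intros r i y [rho [Hr [n [z1 [z2 [H [A1 [A2 [A3 [A4 A5]]]]]]]]]] Hy.
  set (rp := Rmin rho (aa v - Rabs (y - th i))).
  assert (Hrp : 0 < rp) by (apply Rmin_glb_lt; lra).
  assert (Hrp1 : rp <= rho) by apply Rmin_l.
  assert (Hrp2 : rp <= aa v - Rabs (y - th i)) by apply Rmin_r.
  assert (Ry := proj1 (Rabs_le_between (y - th i) (Rabs (y - th i))) (Rle_refl _)).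
  destruct (AM_surj v _ _ _ _ (y - rp) A3) as [u1 [Hu1 E1]]. { lra. }
  destruct (AM_surj v _ _ _ _ (y + rp) A3) as [u2 [Hu2 E2]]. { lra. }
  assert (Hne : u1 <> u2) by (intro; subst; lra).
  set (a1 := Rmin u1 u2). set (b1 := Rmax u1 u2).
  assert (Hab : a1 < b1) by (unfold a1, b1, Rmin, Rmax; destruct (Rle_dec u1 u2); lra).
  assert (HA : AM v n a1 b1 H).
  { apply (AM_sub v n z1 z2); auto; unfold a1, b1, Rmin, Rmax; destruct (Rle_dec u1 u2); lra. }
  assert (Emin : Rmin (H a1) (H b1) = y - rp /\ Rmax (H a1) (H b1) = y + rp).
  { unfold a1, b1. destruct (Rle_dec u1 u2) as [L|L].
    - rewrite (Rmin_left u1 u2 L), (Rmax_right u1 u2 L), E1, E2.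
      rewrite Rmin_left, Rmax_right by lra. lra.
    - rewrite (Rmin_right u1 u2), (Rmax_left u1 u2) by lra. rewrite E1, E2.
      rewrite Rmin_right, Rmax_left by lra. lra. }
  assert (Hd : forall z, a1 <= z <= b1 -> Rabs (H z - th i) <= aa v).
  { intros z Hz. assert (Bz := AM_between v _ _ _ _ _ HA Hz). apply Rabs_le_between. lra. }
  destruct (B_img v Hv _ _ _ _ i HA Hd) as [I1 I2].
  destruct Emin as [Em1 Em2]. rewrite Em1 in I2. rewrite Em2 in I1.
  assert (D1 : B v i y < B v i (y - rp)) by (apply B_decr; auto; lra).
  assert (D2 : B v i (y + rp) < B v i y) by (apply B_decr; auto; lra).
  exists (Rmin (B v i (y - rp) - B v i y) (B v i y - B v i (y + rp))).
  split. { apply Rmin_glb_lt; lra. }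
  exists (S n), a1, b1, (fun z => B v i (H z)).
  split; [unfold a1, Rmin; destruct (Rle_dec u1 u2); lra|].
  split; [unfold b1, Rmax; destruct (Rle_dec u1 u2); lra|].
  split; [apply AM_branch; auto|].
  rewrite I1, I2.
  assert (M1 := Rmin_l (B v i (y - rp) - B v i y) (B v i y - B v i (y + rp))).
  assert (M2 := Rmin_r (B v i (y - rp) - B v i y) (B v i y - B v i (y + rp))).
  lra.
Qed.

Lemma dense_image : forall r i X y (m : Z), Rabs (X - th i) < aa v -> Dense r X ->
  B v i X = y + 2*PI*IZR m -> Dense r y.
Proof.
  intros r i X y m HX HD HB eps He.
  destruct (cont_eps (B v i) X (B_cont v Hv i X ltac:(lra)) eps He) as [eta [Heta Hc]].
  set (e' := Rmin eta (aa v - Rabs (X - th i))).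
  assert (He' : 0 < e') by (apply Rmin_glb_lt; lra).
  destruct (HD e' He') as [d [Hd1 Hd2]].
  assert (Hd3 : Rabs (d - th i) < aa v).
  { assert (Rabs (d - th i) <= Rabs (d - X) + Rabs (X - th i)).
    { replace (d - th i) with ((d - X) + (X - th i)) by ring. apply Rabs_triang. }
    assert (e' <= aa v - Rabs (X - th i)) by apply Rmin_r. lra. }
  exists (B v i d + 2*PI*IZR (-m)). split.
  - rewrite opp_IZR. replace (B v i d + 2 * PI * - IZR m - y) with (B v i d - B v i X) by (rewrite HB; ring).
    apply Hc. assert (e' <= eta) by apply Rmin_l. lra.
  - apply Dd_shift. apply Dd_branch; auto.
Qed.

Definition Vc r t y := th r + PI/3 - t <= y <= th r + PI/3 + t.
Definition AllDense r t := forall y, Vc r t y -> Dense r y.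

Lemma AllDense_base : forall r, AllDense r (aa v - PI/3).
Proof.
  intros r y Hy eps He. unfold Vc in Hy.
  destruct (aa_prop v Hv) as [_ Hb]. generalize PI_gt3; intros HP.
  set (m := th r + PI/3).
  set (de := Rmin (eps/2) ((aa v - PI/3)/2)).
  assert (Hde : 0 < de) by (apply Rmin_glb_lt; lra).
  assert (Hde1 : de <= eps/2) by apply Rmin_l.
  assert (Hde2 : de <= (aa v - PI/3)/2) by apply Rmin_r.
  destruct (Rle_dec y m).
  - exists (y + de). split.
    + replace (y + de - y) with de by ring. rewrite Rabs_right; lra.
    + apply Dd_base. unfold m in *. lra.
  - exists (y - de). split.
    + replace (y - de - y) with (- de) by ring. rewrite Rabs_Ropp, Rabs_right; lra.
    + apply Dd_base. unfold m in *. lra.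
Qed.

Lemma AllDense_step : forall r t, aa v - PI/3 <= t -> -aa v < PI/3 - t -> AllDense r t ->
  AllDense r (K1 v (PI/3 - t) - PI/3).
Proof.
  intros r t Ht1 Ht2 HAD y Hy. unfold Vc in Hy.
  destruct (aa_prop v Hv) as [_ Hb]. generalize PI_gt3; intros HP.
  assert (Kaa := K1_aa v Hv). assert (Kmaa := K1_maa v Hv).
  destruct (Rle_dec y (th r + PI/3 + t)) as [Y1|Y1].
  - destruct (Rle_dec (th r + PI/3 - t) y) as [Y2|Y2].
    + apply HAD. unfold Vc. lra.
    +
      assert (Kn : K1 v (t - PI/3) = 2*PI - K1 v (PI/3 - t)).
      { replace (t - PI/3) with (-(PI/3 - t)) by ring. apply K1_neg. }
      destruct (ivt_gen (K1 v) (-aa v) (t - PI/3) (y - th r + 4*PI/3)) as [u0 [Hu0 Eu0]].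
      * lra.
      * intros z Hz. apply K1_cont. lra.
      * right. lra.
      * assert (u0 <> - aa v) by (intro E; rewrite E in Eu0; lra).
        apply (dense_image r (r + 1) (th (r + 1) + u0) y 1).
        -- replace (th (r + 1) + u0 - th (r + 1)) with u0 by ring. apply Rabs_def1; lra.
        -- apply HAD. unfold Vc. rewrite th_S. lra.
        -- unfold B. replace (th (r + 1) + u0 - th (r + 1)) with u0 by ring. rewrite Eu0, th_S. lra.
  - destruct (ivt_gen (K1 v) (PI/3 - t) (aa v) (y - th r)) as [x0 [Hx0 Ex0]].
    + lra.
    + intros z Hz. apply K1_cont. lra.
    + right. lra.
    + assert (x0 <> aa v) by (intro E; rewrite E in Ex0; lra).
      apply (dense_image r r (th r + x0) y 0).
      * replace (th r + x0 - th r) with x0 by ring. apply Rabs_def1; lra.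
      * apply HAD. unfold Vc. lra.
      * unfold B. replace (th r + x0 - th r) with x0 by ring. rewrite Ex0. change (IZR 0) with 0. ring.
Qed.

Lemma AllDense_final : forall r t, aa v - PI/3 <= t -> PI/3 - t <= -aa v -> AllDense r t ->
  forall y, Dense r y.
Proof.
  intros r t Ht1 Ht2 HAD y.
  destruct (aa_prop v Hv) as [_ Hb]. generalize PI_gt3; intros HP.
  assert (Kaa := K1_aa v Hv). assert (Kmaa := K1_maa v Hv).
  set (q := (y - th r + aa v) / (2*PI)).
  destruct (archimed q) as [A1 A2].
  set (m := (up q - 1)%Z).
  set (y0 := y - 2*PI*IZR m).
  assert (Hq : q * (2*PI) = y - th r + aa v) by (unfold q; field; lra).
  assert (Hm : IZR m = IZR (up q) - 1) by (unfold m; rewrite minus_IZR; auto).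
  assert (Y1 : th r - aa v <= y0) by (unfold y0; rewrite Hm; nra).
  assert (Y2 : y0 < th r - aa v + 2*PI) by (unfold y0; rewrite Hm; nra).
  replace y with (y0 + 2*PI*IZR m) by (unfold y0; ring).
  apply Dense_shift.
  destruct (Rle_dec y0 (th r + aa v)).
  - apply HAD. unfold Vc. lra.
  - destruct (ivt_gen (K1 v) (-aa v) (aa v) (y0 - th r)) as [x0 [Hx0 Ex0]].
    + lra.
    + intros z Hz. apply K1_cont. lra.
    + right. lra.
    + assert (x0 <> aa v) by (intro E; rewrite E in Ex0; lra).
      assert (x0 <> - aa v) by (intro E; rewrite E in Ex0; lra).
      apply (dense_image r r (th r + x0) y0 0).
      * replace (th r + x0 - th r) with x0 by ring. apply Rabs_def1; lra.
      * apply HAD. unfold Vc. lra.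
      * unfold B. replace (th r + x0 - th r) with x0 by ring. rewrite Ex0. change (IZR 0) with 0. ring.
Qed.

Lemma all_dense : forall r y, Dense r y.
Proof.
  intros r.
  destruct (aa_prop v Hv) as [_ Hb]. generalize PI_gt3; intros HP.
  assert (Kaa := K1_aa v Hv).
  set (d0 := K1 v (PI/3) - PI/3).
  assert (Hd0 : 0 < d0).
  { unfold d0. assert (K1 v (aa v) < K1 v (PI/3)) by (apply K1_decr; lra). lra. }
  assert (It : forall N t, aa v - PI/3 <= t -> PI/3 + aa v - INR N * d0 <= t -> AllDense r t ->
               forall y, Dense r y).
  { induction N as [|N IH]; intros t Ht1 Ht2 HAD.
    - apply (AllDense_final r t); auto. simpl in Ht2. lra.
    - destruct (Rle_dec (PI/3 - t) (- aa v)) as [F|F].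
      + apply (AllDense_final r t); auto.
      + apply (IH (K1 v (PI/3 - t) - PI/3)).
        * assert (t <= K1 v (PI/3 - t) - K1 v (PI/3)).
          { replace t with (PI/3 - (PI/3 - t)) at 1 by ring. apply K1_E1; auto; lra. }
          unfold d0 in *. lra.
        * assert (t <= K1 v (PI/3 - t) - K1 v (PI/3)).
          { replace t with (PI/3 - (PI/3 - t)) at 1 by ring. apply K1_E1; auto; lra. }
          rewrite S_INR in Ht2. unfold d0 in *. lra.
        * apply AllDense_step; auto. lra. }
  set (N := Z.to_nat (up (2*PI/3 / d0))).
  apply (It N (aa v - PI/3)); [lra| |apply AllDense_base].
  unfold N. destruct (archimed (2*PI/3 / d0)) as [A1 A2].
  assert (0 < 2*PI/3 / d0) by (apply Rdiv_lt_0_compat; lra).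
  rewrite INR_IZR_INZ, Z2Nat.id by (apply le_IZR; lra).
  assert (2*PI/3 <= IZR (up (2 * PI / 3 / d0)) * d0).
  { assert (2*PI/3/d0 * d0 <= IZR (up (2 * PI / 3 / d0)) * d0) by (apply Rmult_le_compat_r; lra).
    replace (2*PI/3/d0 * d0) with (2*PI/3) in H0 by (field; lra). lra. }
  lra.
Qed.

End Dens.

Lemma dK_eq : forall x y, dK x y = sqrt (2 - 2 * cos (x - y)).
Proof.
  intros x y. unfold dK, Splus, Sminus. f_equal. rewrite cos_minus.
  generalize (sin2_cos2 x) (sin2_cos2 y). unfold Rsqr. intros. nra.
Qed.

Lemma dK_sq : forall x y, dK x y ^ 2 = (cos x - cos y)^2 + (sin x - sin y)^2.
Proof.
  intros x y. unfold dK, Splus, Sminus. rewrite <- Rsqr_pow2, Rsqr_sqrt; auto. apply Rplus_le_le_0_compat; apply pow2_ge_0.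
Qed.

Lemma dK_nonneg : forall x y, 0 <= dK x y.
Proof. intros; unfold dK; apply sqrt_pos. Qed.

Lemma sin_abs_le : forall u, (sin u)^2 <= u^2.
Proof.
  assert (P : forall u, 0 <= u -> (sin u)^2 <= u^2).
  { intros u Hu. destruct (Req_dec u 0) as [E|E]; [subst; rewrite sin_0; lra|].
    assert (S1 : sin u < u) by (apply sin_lt_x; lra).
    assert (S2 : -u <= sin u).
    { destruct (Rle_lt_dec 1 u). { generalize (SIN_bound u); lra. }
      assert (0 < sin u) by (apply sin_gt_0; generalize PI_gt3; lra). lra. }
    nra. }
  intros u. destruct (Rle_lt_dec 0 u); auto.
  replace u with (- (-u)) by ring. rewrite sin_neg. specialize (P (-u) ltac:(lra)). nra.
Qed.

Lemma dK_le : forall x y, dK x y <= Rabs (x - y).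
Proof.
  intros x y. rewrite dK_eq. rewrite <- sqrt_Rsqr_abs. apply sqrt_le_1_alt.
  replace (x - y) with (2 * ((x - y)/2)) at 1 by field. rewrite cos_2a_sin.
  assert (H := sin_abs_le ((x - y)/2)). unfold Rsqr. nra.
Qed.

Lemma dK_pos : forall x y, 0 < Rabs (x - y) < 3 -> 0 < dK x y.
Proof.
  intros x y H. rewrite dK_eq. apply sqrt_lt_R0.
  replace (x - y) with (2 * ((x - y)/2)) by field. rewrite cos_2a_sin.
  assert (sin ((x - y)/2) <> 0).
  { generalize PI_gt3; intros HP. destruct (Rle_lt_dec 0 (x - y)).
    - rewrite Rabs_right in H by lra. assert (0 < sin ((x-y)/2)) by (apply sin_gt_0; lra). lra.
    - rewrite Rabs_left in H by lra. replace ((x - y)/2) with (- ((y - x)/2)) by field.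
      rewrite sin_neg. assert (0 < sin ((y-x)/2)) by (apply sin_gt_0; lra). lra. }
  assert (0 < sin ((x - y)/2) * sin ((x - y)/2)).
  { destruct (Rle_lt_dec 0 (sin ((x - y)/2))); nra. }
  lra.
Qed.

Lemma dK_shift_r : forall x y (k : Z), dK x (y + 2*PI*IZR k) = dK x y.
Proof. intros. unfold dK, Splus, Sminus. destruct (cos_sin_perZ y k) as [A B]. rewrite A, B. auto. Qed.
Lemma dK_shift_l : forall x y (k : Z), dK (x + 2*PI*IZR k) y = dK x y.
Proof. intros. unfold dK, Splus, Sminus. destruct (cos_sin_perZ x k) as [A B]. rewrite A, B. auto. Qed.
Lemma dK_refl : forall x, dK x x = 0.
Proof. intros. unfold dK. replace ((Splus x - Splus x) ^ 2 + (Sminus x - Sminus x) ^ 2) with 0 by ring. apply sqrt_0. Qed.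

Lemma dK_two : forall P e1 e2 d, 0 <= d -> 2 * d = dK e1 e2 -> d <= dK P e1 \/ d <= dK P e2.
Proof.
  intros P e1 e2 d Hd Hd2.
  destruct (Rle_lt_dec d (dK P e1)) as [A|A]; [left; auto|].
  destruct (Rle_lt_dec d (dK P e2)) as [B|B]; [right; auto|].
  exfalso.
  assert (S1 := dK_sq P e1). assert (S2 := dK_sq P e2). assert (S3 := dK_sq e1 e2).
  assert (N1 := dK_nonneg P e1). assert (N2 := dK_nonneg P e2).
  assert (dK P e1 ^ 2 < d^2) by nra. assert (dK P e2 ^ 2 < d^2) by nra.
  assert (dK e1 e2 ^ 2 = 4 * d^2) by (rewrite <- Hd2; ring).
  assert ((cos e1 - cos e2)^2 <= 2 * ((cos P - cos e1)^2 + (cos P - cos e2)^2)).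
  { assert (0 <= (2 * cos P - cos e1 - cos e2)^2) by apply pow2_ge_0. nra. }
  assert ((sin e1 - sin e2)^2 <= 2 * ((sin P - sin e1)^2 + (sin P - sin e2)^2)).
  { assert (0 <= (2 * sin P - sin e1 - sin e2)^2) by apply pow2_ge_0. nra. }
  lra.
Qed.

Section Final.
Variable v : R.
Hypothesis Hv : 0 < v < 1/2.

Lemma WW_pos : 0 < WW v /\ WW v < 2.
Proof.
  destruct (aa_prop v Hv) as [_ Hb]. generalize PI_gt3 PI_le4; intros HP HP'.
  unfold WW. split; lra.
Qed.

Lemma stop_pts : forall n x y G, AM v n x y G -> Stop v G x y ->
  exists j u1 u2, x <= u1 <= y /\ x <= u2 <= y /\
    G u1 = th j + 2*PI/3 - aa v /\ G u2 = th j + aa v.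
Proof.
  intros n x y G HA [j [S1 S2]]. destruct WW_pos as [W1 W2]. unfold WW in W1.
  destruct (AM_surj v _ _ _ _ (th j + 2*PI/3 - aa v) HA) as [u1 [H1 E1]]. { lra. }
  destruct (AM_surj v _ _ _ _ (th j + aa v) HA) as [u2 [H2 E2]]. { lra. }
  exists j, u1, u2. auto.
Qed.

Lemma sens : sensitive v.
Proof.
  destruct WW_pos as [W1 W2].
  exists (dK 0 (WW v) / 2). split.
  { apply Rdiv_lt_0_compat; [|lra]. apply dK_pos. rewrite Rabs_left; lra. }
  intros p eps Heps.
  set (l := Rmin (Rmin eps 1) (WW v) / 2).
  assert (Hl : 0 < l) by (unfold l; apply Rdiv_lt_0_compat; [repeat apply Rmin_glb_lt|]; lra).
  assert (Hl1 : l <= eps/2) by (unfold l; generalize (Rmin_l (Rmin eps 1) (WW v)) (Rmin_l eps 1); lra).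
  assert (Hl2 : l <= 1/2) by (unfold l; generalize (Rmin_l (Rmin eps 1) (WW v)) (Rmin_r eps 1); lra).
  assert (Hl3 : l <= WW v / 2) by (unfold l; generalize (Rmin_r (Rmin eps 1) (WW v)); lra).
  destruct (claimF v Hv (p + l/2) (p + l) ltac:(lra) ltac:(lra)) as [n [G [Hn [HA HS]]]].
  destruct (stop_pts n _ _ G HA HS) as [j [u1 [u2 [Hu1 [Hu2 [E1 E2]]]]]].
  set (P := Kiter v (fun _ => (true,true,true)) n p).
  assert (Hd : 2 * (dK 0 (WW v) / 2) = dK (th j + 2*PI/3 - aa v) (th j + aa v)).
  { rewrite !dK_eq. replace (0 - WW v) with (-(WW v)) by ring.
    replace (th j + 2 * PI / 3 - aa v - (th j + aa v)) with (- WW v) by (unfold WW; ring). field. }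
  assert (0 <= dK 0 (WW v) / 2) by (generalize (dK_nonneg 0 (WW v)); lra).
  destruct (dK_two P _ _ _ H Hd) as [D|D].
  - assert (Pa : Path v n u1 (G u1)) by (destruct HA as [_ [_ [_ Hp]]]; apply Hp; auto).
    destruct Pa as [om' [k Hk]].
    exists u1, n, (fun _ => (true,true,true)), om'. split; [|split].
    + apply Rle_lt_trans with (Rabs (u1 - p)); [apply dK_le|]. rewrite Rabs_right; lra.
    + apply dK_pos. rewrite Rabs_right; lra.
    + fold P. rewrite Hk, E1, dK_shift_r. auto.
  - assert (Pa : Path v n u2 (G u2)) by (destruct HA as [_ [_ [_ Hp]]]; apply Hp; auto).
    destruct Pa as [om' [k Hk]].
    exists u2, n, (fun _ => (true,true,true)), om'. split; [|split].
    + apply Rle_lt_trans with (Rabs (u2 - p)); [apply dK_le|]. rewrite Rabs_right; lra.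
    + apply dK_pos. rewrite Rabs_right; lra.
    + fold P. rewrite Hk, E2, dK_shift_r. auto.
Qed.

Lemma norm_j : forall j : Z, exists r q : Z, (r = 0 \/ r = 1 \/ r = 2)%Z /\ th j = th r + 2*PI*IZR q.
Proof.
  intros j. pose proof (Z.div_mod j 3 ltac:(lia)) as E.
  assert (Hr : (0 <= j mod 3 < 3)%Z) by (apply Z.mod_pos_bound; lia).
  exists (j mod 3)%Z, (j / 3)%Z. split; [lia|]. rewrite E at 1. apply th_split.
Qed.

Lemma trans : top_transitive v.
Proof.
  destruct WW_pos as [W1 W2].
  intros p1 p2 eps1 eps2 He1 He2.
  set (l := Rmin eps1 (WW v) / 2).
  assert (Hl : 0 < l) by (unfold l; apply Rdiv_lt_0_compat; [apply Rmin_glb_lt|]; lra).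
  assert (Hl1 : l <= eps1/2) by (unfold l; generalize (Rmin_l eps1 (WW v)); lra).
  assert (Hl3 : l <= WW v / 2) by (unfold l; generalize (Rmin_r eps1 (WW v)); lra).
  destruct (claimF v Hv p1 (p1 + l) ltac:(lra) ltac:(lra)) as [n [G [Hn [HA [j [S1 S2]]]]]].
  destruct (norm_j j) as [r [q [Hr Eth]]].
  destruct (all_dense v Hv r p2 eps2 He2) as [d [Hd [rho [Hrho [n2 [z1 [z2 [H [O1 [O2 [HH [C1 C2]]]]]]]]]]]].
  destruct (AM_surj v _ _ _ _ d HH) as [z [Hz Ez]]. { lra. }
  assert (HzO : th j + 2*PI/3 - aa v <= z + 2*PI*IZR q <= th j + aa v) by (destruct HH; lra).
  destruct (AM_surj v _ _ _ _ (z + 2*PI*IZR q) HA) as [u [Hu Eu]]. { lra. }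
  assert (P1 : Path v n u z).
  { apply (Path_shift' v _ _ _ q). rewrite <- Eu. destruct HA as [_ [_ [_ Hp]]]. apply Hp; auto. }
  assert (P2 : Path v n2 z d).
  { rewrite <- Ez. destruct HH as [_ [_ [_ Hp]]]. apply Hp; auto. }
  destruct (Path_comp v _ _ _ _ _ P1 P2) as [om [k Hk]].
  exists (n + n2)%nat, om, u. split; [lia|split].
  - apply Rle_lt_trans with (Rabs (u - p1)); [apply dK_le|]. rewrite Rabs_right; lra.
  - rewrite Hk, dK_shift_l. apply Rle_lt_trans with (Rabs (d - p2)); [apply dK_le|auto].
Qed.

Lemma Cov_open : forall r y rho y' rho', Cov v r y rho -> 0 < rho' -> Rabs (y' - y) <= rho - rho' -> Cov v r y' rho'.
Proof.
  intros r y rho y' rho' [n [z1 [z2 [H [A1 [A2 [A3 [A4 A5]]]]]]]] Hr Hy.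
  apply Rabs_le_between in Hy.
  exists n, z1, z2, H. split; [auto|split; [auto|split; [auto|split; lra]]].
Qed.

Lemma dense3 : forall p eps, 0 < eps -> exists y R0 R1 R2, Rabs (y - p) < eps /\
  0 < R0 /\ 0 < R1 /\ 0 < R2 /\ Cov v 0 y R0 /\ Cov v 1 y R1 /\ Cov v 2 y R2.
Proof.
  intros p eps He.
  destruct (all_dense v Hv 0 p (eps/4) ltac:(lra)) as [d0 [Hd0 [r0 [Hr0 C0]]]].
  destruct (all_dense v Hv 1 d0 (Rmin (r0/2) (eps/4)) ltac:(apply Rmin_glb_lt; lra)) as [d1 [Hd1 [r1 [Hr1 C1]]]].
  assert (M1 := Rmin_l (r0/2) (eps/4)). assert (M2 := Rmin_r (r0/2) (eps/4)).
  destruct (all_dense v Hv 2 d1 (Rmin (Rmin (r0/4) (r1/2)) (eps/4))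
     ltac:(repeat apply Rmin_glb_lt; lra)) as [d2 [Hd2 [r2 [Hr2 C2]]]].
  assert (M3 := Rmin_l (Rmin (r0/4) (r1/2)) (eps/4)). assert (M4 := Rmin_r (Rmin (r0/4) (r1/2)) (eps/4)).
  assert (M5 := Rmin_l (r0/4) (r1/2)). assert (M6 := Rmin_r (r0/4) (r1/2)).
  exists d2, (r0/4), (r1/2), r2. split.
  { assert (Rabs (d2 - p) <= Rabs (d2 - d1) + Rabs (d1 - d0) + Rabs (d0 - p)).
    { replace (d2 - p) with ((d2 - d1) + (d1 - d0) + (d0 - p)) by ring.
      eapply Rle_trans; [apply Rabs_triang|]. apply Rplus_le_compat_r. apply Rabs_triang. }
    lra. }
  split; [lra|split; [lra|split; [lra|split; [|split]]]]; auto.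
  - apply (Cov_open 0 d0 r0); [auto|lra|].
    assert (Rabs (d2 - d0) <= Rabs (d2 - d1) + Rabs (d1 - d0)).
    { replace (d2 - d0) with ((d2 - d1) + (d1 - d0)) by ring. apply Rabs_triang. }
    lra.
  - apply (Cov_open 1 d1 r1); [auto|lra|lra].
Qed.

Lemma periodic : dense_periodic v.
Proof.
  destruct WW_pos as [W1 W2].
  intros p eps He.
  destruct (dense3 p (eps/2) ltac:(lra)) as [y [R0 [R1 [R2 [Hyp [HR0 [HR1 [HR2 [C0 [C1 C2]]]]]]]]]].
  set (rho := Rmin (Rmin (Rmin R0 R1) R2) (Rmin (eps/4) (WW v / 4))).
  assert (Hrho : 0 < rho) by (unfold rho; repeat apply Rmin_glb_lt; lra).
  assert (Q1 : rho <= R0 /\ rho <= R1 /\ rho <= R2 /\ rho <= eps/4 /\ rho <= WW v / 4).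
  { unfold rho. generalize (Rmin_l (Rmin (Rmin R0 R1) R2) (Rmin (eps/4) (WW v / 4)))
      (Rmin_r (Rmin (Rmin R0 R1) R2) (Rmin (eps/4) (WW v / 4))) (Rmin_l (Rmin R0 R1) R2)
      (Rmin_r (Rmin R0 R1) R2) (Rmin_l R0 R1) (Rmin_r R0 R1) (Rmin_l (eps/4) (WW v / 4))
      (Rmin_r (eps/4) (WW v / 4)). lra. }
  destruct (claimF v Hv (y - rho) (y + rho) ltac:(lra) ltac:(lra)) as [n [G [Hn [HA [j [S1 S2]]]]]].
  destruct (norm_j j) as [r [q [Hr Eth]]].
  assert (Cr : exists Rr, rho <= Rr /\ Cov v r y Rr).
  { destruct Hr as [E|[E|E]]; subst r; [exists R0|exists R1|exists R2]; split; auto; lra. }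
  destruct Cr as [Rr [HRr [n2 [z1 [z2 [H [O1 [O2 [HH [D1 D2]]]]]]]]]].
  assert (Hz12 : z1 < z2) by (destruct HH; lra).
  destruct (AM_surj v _ _ _ _ (z1 + 2*PI*IZR q) HA) as [u1 [Hu1 Eu1]]. { lra. }
  destruct (AM_surj v _ _ _ _ (z2 + 2*PI*IZR q) HA) as [u2 [Hu2 Eu2]]. { lra. }
  assert (Hne : u1 <> u2) by (intro; subst; lra).
  set (a1 := Rmin u1 u2). set (b1 := Rmax u1 u2).
  assert (Hab : a1 < b1) by (unfold a1, b1, Rmin, Rmax; destruct (Rle_dec u1 u2); lra).
  assert (Ha1 : y - rho <= a1) by (unfold a1, Rmin; destruct (Rle_dec u1 u2); lra).
  assert (Hb1 : b1 <= y + rho) by (unfold b1, Rmax; destruct (Rle_dec u1 u2); lra).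
  assert (HA' : AM v n a1 b1 G) by (apply (AM_sub v n (y - rho) (y + rho)); auto; lra).
  assert (Ends : (G a1 = z1 + 2*PI*IZR q /\ G b1 = z2 + 2*PI*IZR q) \/
                 (G a1 = z2 + 2*PI*IZR q /\ G b1 = z1 + 2*PI*IZR q)).
  { unfold a1, b1. destruct (Rle_dec u1 u2) as [L|L].
    - left. rewrite (Rmin_left u1 u2 L), (Rmax_right u1 u2 L). auto.
    - right. rewrite (Rmin_right u1 u2), (Rmax_left u1 u2) by lra. auto. }
  assert (Inside : forall u, a1 <= u <= b1 -> z1 <= G u - 2*PI*IZR q <= z2).
  { intros u Hu. assert (Bt := AM_between v _ _ _ _ _ HA' Hu).
    destruct Ends as [[E1 E2]|[E1 E2]]; rewrite E1, E2 in Bt;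
    unfold Rmin, Rmax in Bt; destruct (Rle_dec _ _); lra. }
  set (Phi := fun u => H (G u - 2*PI*IZR q) - u).
  assert (Hcont : forall u, a1 <= u <= b1 -> continuity_pt Phi u).
  { intros u Hu. unfold Phi. apply continuity_pt_minus; [|apply continuity_pt_id].
    apply (continuity_pt_comp (fun u => G u - 2*PI*IZR q) H).
    - apply continuity_pt_minus; [|apply continuity_pt_const; intros ? ?; auto].
      destruct HA' as [_ [Hc _]]. apply Hc; auto.
    - destruct HH as [_ [Hc _]]. apply Hc. apply Inside; auto. }
  assert (Sgn : (Phi a1 <= 0 <= Phi b1) \/ (Phi b1 <= 0 <= Phi a1)).
  { unfold Phi. destruct Ends as [[E1 E2]|[E1 E2]]; rewrite E1, E2;
    replace (z1 + 2 * PI * IZR q - 2 * PI * IZR q) with z1 by ring;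
    replace (z2 + 2 * PI * IZR q - 2 * PI * IZR q) with z2 by ring;
    unfold Rmin, Rmax in D1, D2; destruct (Rle_dec (H z1) (H z2)); lra. }
  destruct (ivt_gen Phi a1 b1 0 ltac:(lra) Hcont Sgn) as [u [Hu Eu]].
  unfold Phi in Eu.
  assert (P1 : Path v n u (G u - 2*PI*IZR q)).
  { replace (G u - 2 * PI * IZR q) with (G u + 2*PI*IZR (-q)) by (rewrite opp_IZR; ring).
    apply Path_shift. destruct HA' as [_ [_ [_ Hp]]]. apply Hp; auto. }
  assert (P2 : Path v n2 (G u - 2*PI*IZR q) u).
  { replace u with (H (G u - 2*PI*IZR q)) at 2 by lra. destruct HH as [_ [_ [_ Hp]]]. apply Hp. apply Inside; auto. }
  destruct (Path_comp v _ _ _ _ _ P1 P2) as [om [k Hk]].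
  exists om, u, (n + n2)%nat. split; [lia|split].
  - apply Rle_lt_trans with (Rabs (u - p)); [apply dK_le|].
    assert (Rabs (u - p) <= Rabs (u - y) + Rabs (y - p)).
    { replace (u - p) with ((u - y) + (y - p)) by ring. apply Rabs_triang. }
    assert (Rabs (u - y) <= rho) by (apply Rabs_le_between; lra). lra.
  - rewrite Hk, dK_shift_l. apply dK_refl.
Qed.

End Final.

Theorem theorem1 : forall v : R, 0 < v < 1 / 2 -> realizes_chaos v.
Proof.
  intros v Hv. split; [|split].
  - apply sens; auto.
  - apply trans; auto.
  - apply periodic; auto.
Qed.
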